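(* Let $k\ge1$ and $g=H^{\otimes k}$, a $2^k\times2^k$ matrix, where $H=\begin{pmatrix}1&1\\1&-1\end{pmatrix}$. Then $T:=\sqrt{M_1M_2}\,\|g\|_2=2^{3k/2}$ and the quantum value $Q(g)$ equals $2^{3k/2}$ (attained). Moreover, for every even $k$ the local bound $B(g)$ equals $2^{3k/2}$, so the corresponding inequality admits no quantum violation.
   Context: Here $M_1=M_2=2^k$. $\|g\|_2$ is the largest singular value. The quantum value $Q(g)$ is the supremum of $\sum_{x_1,x_2}g_{x_1,x_2}\operatorname{tr}(\rho\,\mathcal A_1(x_1)\otimes\mathcal A_2(x_2))$ over finite-dimensional complex Hilbert spaces $\mathcal H_1,\mathcal H_2$, density operators $\rho$ on $\mathcal H_1\otimes\mathcal H_2$ and Hermitian operators $\mathcal A_i(x_i)$ on $\mathcal H_i$ with eigenvalues in $[-1,1]$. The local bound is $B(g)=\max\{\sum_{x_1,x_2}g_{x_1,x_2}a_{x_1}b_{x_2}: a\in\{\pm1\}^{M_1},b\in\{\pm1\}^{M_2}\}$. *)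

(* Defs.v *)
From HB Require Import structures.
From mathcomp Require Import all_boot all_order all_algebra.
From mathcomp Require Import character.
Set Implicit Arguments. Unset Strict Implicit. Unset Printing Implicit Defensive.
Import Order.TTheory GRing.Theory Num.Theory.
Local Open Scope ring_scope.

Definition hadamard2 (F : fieldType) : 'M[F]_2 :=
  \matrix_(i < 2, j < 2) (if (i == 1%N :> nat) && (j == 1%N :> nat) then -1 else 1).

Fixpoint hadamard (F : fieldType) (k : nat) : 'M[F]_(2 ^ k) :=
  match k return 'M[F]_(2 ^ k) with
  | 0 => 1%:M
  | k'.+1 => castmx (esym (expnS 2 k'), esym (expnS 2 k'))
                    (tprod (hadamard2 F) (hadamard F k'))
  end.

Definition adjmx (C : numClosedFieldType) m n (A : 'M[C]_(m, n)) : 'M[C]_(n, m) :=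
  (map_mx Num.conj A)^T.

Definition largest_singular_value (C : numClosedFieldType) n (g : 'M[C]_n) (s : C) :=
  [/\ 0 <= s, eigenvalue (adjmx g *m g) (s ^+ 2)
    & forall t : C, 0 <= t -> eigenvalue (adjmx g *m g) (t ^+ 2) -> t <= s].

Definition hermitian (C : numClosedFieldType) n (A : 'M[C]_n) : Prop :=
  adjmx A = A.

Definition observable (C : numClosedFieldType) n (A : 'M[C]_n) : Prop :=
  hermitian A /\ forall a : C, eigenvalue A a -> -1 <= a <= 1.

Definition density (C : numClosedFieldType) n (rho : 'M[C]_n) : Prop :=
  [/\ hermitian rho, (forall a : C, eigenvalue rho a -> 0 <= a) & \tr rho = 1].

Definition qvalue (C : numClosedFieldType) M1 M2 (g : 'M[C]_(M1, M2)) d1 d2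
  (rho : 'M[C]_(d1 * d2)) (A1 : 'I_M1 -> 'M[C]_d1) (A2 : 'I_M2 -> 'M[C]_d2) : C :=
  \sum_(x1 < M1) \sum_(x2 < M2) g x1 x2 * \tr (rho *m tprod (A1 x1) (A2 x2)).

(* Quantum strategies: finite-dimensional H1 = C^d1, H2 = C^d2. *)
Definition qstrategy (C : numClosedFieldType) M1 M2 d1 d2
  (rho : 'M[C]_(d1 * d2)) (A1 : 'I_M1 -> 'M[C]_d1) (A2 : 'I_M2 -> 'M[C]_d2) : Prop :=
  density rho /\ (forall x1, observable (A1 x1)) /\ (forall x2, observable (A2 x2)).

Definition sgnb (R : pzRingType) (b : bool) : R := (-1) ^+ b.

Definition local_value (R : realDomainType) M1 M2 (g : 'M[R]_(M1, M2))
  (a : {ffun 'I_M1 -> bool}) (b : {ffun 'I_M2 -> bool}) : R :=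
  \sum_(x1 < M1) \sum_(x2 < M2) g x1 x2 * sgnb R (a x1) * sgnb R (b x2).

(* B(g) = max over a in {+-1}^M1, b in {+-1}^M2 (seeded with a = b = all ones). *)
Definition local_bound (R : realDomainType) M1 M2 (g : 'M[R]_(M1, M2)) : R :=
  \big[Num.max/local_value g [ffun=> false] [ffun=> false]]_(a : {ffun 'I_M1 -> bool})
   \big[Num.max/local_value g [ffun=> false] [ffun=> false]]_(b : {ffun 'I_M2 -> bool})
     local_value g a b.

(* Main.v *)
Require Import Defs.
From HB Require Import structures.
From mathcomp Require Import all_boot all_order all_algebra character spectral sesquilinear.
From mathcomp Require Import zify ring lra.
Set Implicit Arguments. Unset Strict Implicit. Unset Printing Implicit Defensive.
Import Order.TTheory GRing.Theory Num.Theory.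
Local Open Scope ring_scope.

Section Idx.
Variables m n : nat.

Lemma tidx_proof (i : 'I_m) (j : 'I_n) : (i * n + j < m * n)%N.
Proof. have := ltn_ord i; have := ltn_ord j; nia. Qed.
Definition tidx (i : 'I_m) (j : 'I_n) : 'I_(m * n) := Ordinal (tidx_proof i j).

Lemma tn_gt0 (k : 'I_(m * n)) : (0 < n)%N.
Proof. have := ltn_ord k; move: (nat_of_ord k) => x; case: (n) => [|//]; by rewrite muln0. Qed.
Lemma tfst_proof (k : 'I_(m * n)) : (k %/ n < m)%N.
Proof. by rewrite ltn_divLR ?tn_gt0. Qed.
Lemma tsnd_proof (k : 'I_(m * n)) : (k %% n < n)%N.
Proof. by rewrite ltn_pmod ?tn_gt0. Qed.
Definition tfst (k : 'I_(m * n)) : 'I_m := Ordinal (tfst_proof k).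
Definition tsnd (k : 'I_(m * n)) : 'I_n := Ordinal (tsnd_proof k).

Lemma tidxK (k : 'I_(m * n)) : tidx (tfst k) (tsnd k) = k.
Proof. by apply: val_inj => /=; rewrite -divn_eq. Qed.
Lemma tfst_tidx i j : tfst (tidx i j) = i.
Proof.
apply: val_inj => /=; have n0 : (0 < n)%N by case: j => j /=; case: (n) => //.
by rewrite divnMDl // divn_small ?addn0.
Qed.
Lemma tsnd_tidx i j : tsnd (tidx i j) = j.
Proof. by apply: val_inj => /=; rewrite modnMDl modn_small. Qed.
Lemma tidx_inj i j i' j' : (tidx i j == tidx i' j') = (i == i') && (j == j').
Proof.
apply/eqP/andP => [e|[/eqP-> /eqP->]] //.
by split; apply/eqP; [rewrite -(tfst_tidx i j) e tfst_tidx | rewrite -(tsnd_tidx i j) e tsnd_tidx].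
Qed.

Lemma sum_tidx (R : nmodType) (F : 'I_(m * n) -> R) :
  \sum_k F k = \sum_(i < m) \sum_(j < n) F (tidx i j).
Proof.
rewrite pair_big /= (reindex (fun p : 'I_m * 'I_n => tidx p.1 p.2)) //.
by exists (fun k => (tfst k, tsnd k)) => [[i j] _ | k _] /=; rewrite ?tfst_tidx ?tsnd_tidx ?tidxK.
Qed.
End Idx.

Lemma trow_entry (F : fieldType) n1 (a : 'rV[F]_n1) m2 n2 (B : 'M[F]_(m2, n2)) i2 (j1 : 'I_n1) j2 :
  trow a B i2 (tidx j1 j2) = a 0 j1 * B i2 j2.
Proof.
elim: n1 a j1 => [|n1 IH] a j1; first by case: j1.
rewrite /=.
case: (unliftP 0 j1) => [j1' ->|->].
  have -> : tidx (lift 0 j1') j2 = rshift n2 (tidx j1' j2).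
    by apply: val_inj => /=; rewrite /bump leq0n /=; nia.
  by rewrite row_mxEr IH !mxE; congr (_ * _); congr (a _ _); apply: val_inj.
have -> : tidx (0 : 'I_n1.+1) j2 = lshift (n1 * n2) j2 by apply: val_inj.
by rewrite row_mxEl !mxE; congr (a _ _ * _); apply: val_inj.
Qed.

Lemma tprod_entry (F : fieldType) m1 n1 (A : 'M[F]_(m1, n1)) m2 n2 (B : 'M[F]_(m2, n2)) i1 i2 j1 j2 :
  tprod A B (tidx i1 i2) (tidx j1 j2) = A i1 j1 * B i2 j2.
Proof.
elim: m1 A i1 => [|m1 IH] A i1; first by case: i1.
rewrite /=.
case: (unliftP 0 i1) => [i1' ->|->].
  have -> : tidx (lift 0 i1') i2 = rshift m2 (tidx i1' i2).
    by apply: val_inj => /=; rewrite /bump leq0n /=; nia.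
  by rewrite col_mxEd IH !mxE; congr (_ * _); congr (A _ _); apply: val_inj.
have -> : tidx (0 : 'I_m1.+1) i2 = lshift (m1 * m2) i2 by apply: val_inj.
by rewrite col_mxEu trow_entry !mxE; congr (_ * _); congr (A _ _); apply: val_inj.
Qed.

Lemma tprod_eq (F : Type) m1 m2 n1 n2 (X Y : 'M[F]_(m1 * m2, n1 * n2)) :
  (forall i1 i2 j1 j2, X (tidx i1 i2) (tidx j1 j2) = Y (tidx i1 i2) (tidx j1 j2)) -> X = Y.
Proof. by move=> H; apply/matrixP => i j; rewrite -(tidxK i) -(tidxK j) H. Qed.

Lemma sum2 (R : nmodType) (F : 'I_2 -> R) : \sum_(i < 2) F i = F ord0 + F (lift ord0 ord0).
Proof. by rewrite big_ord_recl big_ord1. Qed.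
Section Had.
Definition ek k : (2 * 2 ^ k = 2 ^ k.+1)%N := esym (expnS 2 k).
Definition hidx k (i1 : 'I_2) (i2 : 'I_(2 ^ k)) : 'I_(2 ^ k.+1) := cast_ord (ek k) (tidx i1 i2).
Definition hfst k (x : 'I_(2 ^ k.+1)) : 'I_2 := tfst (cast_ord (esym (ek k)) x).
Definition hsnd k (x : 'I_(2 ^ k.+1)) : 'I_(2 ^ k) := tsnd (cast_ord (esym (ek k)) x).

Lemma hidxK k x : hidx (hfst x) (hsnd x) = x :> 'I_(2 ^ k.+1).
Proof. by rewrite /hidx /hfst /hsnd tidxK cast_ordKV. Qed.
Lemma hfst_hidx k i j : hfst (hidx i j : 'I_(2 ^ k.+1)) = i.
Proof. by rewrite /hidx /hfst cast_ordK tfst_tidx. Qed.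
Lemma hsnd_hidx k i j : hsnd (hidx i j : 'I_(2 ^ k.+1)) = j.
Proof. by rewrite /hidx /hsnd cast_ordK tsnd_tidx. Qed.
Lemma hidx_inj k i j i' j' : (hidx i j == hidx i' j' :> 'I_(2 ^ k.+1)) = (i == i') && (j == j').
Proof. by rewrite /hidx -tidx_inj; apply/eqP/eqP => [/(congr1 val)/= e|->] //; apply: val_inj. Qed.
Lemma sum_hidx k (R : nmodType) (F : 'I_(2 ^ k.+1) -> R) :
  \sum_x F x = \sum_(i < 2) \sum_(j < 2 ^ k) F (hidx i j).
Proof.
rewrite -(sum_tidx (fun t => F (cast_ord (ek k) t))) (reindex (cast_ord (ek k))) //.
by exists (cast_ord (esym (ek k))) => x _; rewrite ?cast_ordK ?cast_ordKV.
Qed.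
Lemma hidx_ind k (P : 'I_(2 ^ k.+1) -> Prop) : (forall i j, P (hidx i j)) -> forall x, P x.
Proof. by move=> H x; rewrite -(hidxK x). Qed.

Variable F : fieldType.
Lemma hadE k i1 i2 j1 j2 :
  hadamard F k.+1 (hidx i1 i2) (hidx j1 j2) = hadamard2 F i1 j1 * hadamard F k i2 j2.
Proof.
rewrite /= castmxE -tprod_entry; congr (tprod _ _ _ _); apply: val_inj => //.
Qed.

Lemma had2E (i j : 'I_2) : hadamard2 F i j = if (i == 1 :> nat) && (j == 1 :> nat) then -1 else 1.
Proof. by rewrite mxE. Qed.

Lemma had_pm k i j : hadamard F k i j = 1 \/ hadamard F k i j = -1.
Proof.
elim: k i j => [|k IH] i j.
  by rewrite /= mxE; case: i j => [[|//] ?] [[|//] ?]; left.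
move: i j; apply: hidx_ind => i1 i2; apply: hidx_ind => j1 j2.
rewrite hadE had2E; case: ifP => _; case: (IH i2 j2) => ->; rewrite ?mulr1 ?mulrN1 ?opprK; by [left|right].
Qed.

Lemma had_sq k i j : hadamard F k i j * hadamard F k i j = 1.
Proof. by case: (had_pm i j) => ->; rewrite ?mulr1 ?mulrNN ?mulr1. Qed.

Lemma had_sym k i j : hadamard F k i j = hadamard F k j i.
Proof.
elim: k i j => [|k IH] i j.
  by rewrite /= !mxE eq_sym.
move: i j; apply: hidx_ind => i1 i2; apply: hidx_ind => j1 j2.
by rewrite !hadE IH !had2E andbC.
Qed.

Lemma had_orth k x x' :
  \sum_y hadamard F k x y * hadamard F k x' y = (2 ^ k)%:R * (x == x')%:R.
Proof.
elim: k x x' => [|k IH] x x'.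
  rewrite big_ord1 /= !mxE.
  by move: x x' => [[|//] ?] [[|//] ?]; rewrite /=.
move: x x'; apply: hidx_ind => i1 i2; apply: hidx_ind => j1 j2.
rewrite sum_hidx.
under eq_bigr => y1 _ do under eq_bigr => y2 _ do
  rewrite !hadE mulrACA.
rewrite -big_distrlr /= IH hidx_inj.
have -> : \sum_(i < 2) hadamard2 F i1 i * hadamard2 F j1 i = 2%:R * (i1 == j1)%:R.
  rewrite sum2 !had2E.
  case: i1 j1 => [[|[|//]] ?] [[|[|//]] ?] /=; rewrite ?mulr1 ?mulrN1 ?mulrNN ?opprK ?subrr ?mulr0 ?mulr1 ?mulr1n //; rewrite ?mulN1r ?subrr ?addrN //.
rewrite expnS natrM mulrACA; congr (_ * _).
by case: (i1 == j1); case: (i2 == j2); rewrite ?mulr1 ?mulr0.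
Qed.
End Had.
Section PartA.
Variable C : numClosedFieldType.
Local Notation M k := ((2 ^ k)%:R : C).

Lemma had_conj k i j : Num.conj (hadamard C k i j) = hadamard C k i j.
Proof. by case: (had_pm C i j) => ->; rewrite ?rmorph1 ?rmorphN ?rmorph1. Qed.

Lemma had_adjmx k : adjmx (hadamard C k) = hadamard C k.
Proof. by apply/matrixP => i j; rewrite !mxE had_conj had_sym. Qed.

Lemma had_mulmx k : hadamard C k *m hadamard C k = (M k)%:M.
Proof.
apply/matrixP => i j; rewrite !mxE.
under eq_bigr => l _ do rewrite (had_sym C l j).
by rewrite had_orth mulr_natr.
Qed.

Lemma eigen_scalar n (a b : C) : (0 < n)%N -> eigenvalue (a%:M : 'M_n) b -> b = a.
Proof.
move=> n0 /eigenvalueP [v]; rewrite mul_mx_scalar => /eqP; rewrite -subr_eq0 -scalerBl.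
by rewrite scaler_eq0 subr_eq0 => /orP[/eqP->|/eqP->] //; rewrite eqxx.
Qed.

Lemma eigen_scalar2 n (a : C) : (0 < n)%N -> eigenvalue (a%:M : 'M_n) a.
Proof.
move=> n0; apply/eigenvalueP; exists (const_mx 1); first by rewrite mul_mx_scalar.
apply/negP => /eqP/rowP/(_ (Ordinal n0)); rewrite !mxE => /eqP; by rewrite oner_eq0.
Qed.

Lemma partA k :
  (exists s : C, largest_singular_value (hadamard C k) s) /\
   (forall s : C, largest_singular_value (hadamard C k) s ->
      sqrtC ((2 ^ k)%:R * (2 ^ k)%:R) * s = sqrtC (2 ^ (3 * k))%:R).
Proof.
have n0 : (0 < 2 ^ k)%N by rewrite expn_gt0.
have E : adjmx (hadamard C k) *m hadamard C k = (M k)%:M by rewrite had_adjmx had_mulmx.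
have M0 : 0 <= M k by rewrite ler0n.
split.
  exists (sqrtC (M k)); split; first by rewrite sqrtC_ge0.
    by rewrite E sqrtCK; apply: eigen_scalar2.
  move=> t t0; rewrite E => /eigen_scalar => /(_ n0) tE.
  by rewrite -tE sqrCK.
move=> s [s0]; rewrite E => /eigen_scalar => /(_ n0) sE _.
have -> : s = sqrtC (M k) by rewrite -sE sqrCK.
rewrite -sqrtCM ?qualifE ?mulr_ge0 ?nnegrE ?mulr_ge0 //.
by rewrite -!natrM -!expnD; do 3 f_equal; lia.
exact: mulr_ge0.
Qed.
End PartA.
Section PartD.
Local Notation h k := (hadamard rat k).
Local Notation H := (hadamard2 rat).

Lemma sgnb_sq (b : bool) : sgnb rat b * sgnb rat b = 1.
Proof. by case: b; rewrite /sgnb /= ?expr1 ?expr0 ?mulrNN mulr1. Qed.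

Lemma lv_upper k m (a : {ffun 'I_(2 ^ k) -> bool}) (b : {ffun 'I_(2 ^ k) -> bool}) :
  k = (m + m)%N -> local_value (h k) a b <= (2 ^ (3 * m))%:R.
Proof.
move=> km.
set al := fun x => sgnb rat (a x); set be := fun y => sgnb rat (b y).
set w := fun x => \sum_y h k x y * be y.
set t : rat := (2 ^ m)%:R.
have Mt : (2 ^ k)%:R = t * t :> rat by rewrite /t -natrM -expnD km.
have LV : local_value (h k) a b = \sum_x al x * w x.
  apply: eq_bigr => x _; rewrite /w mulr_sumr; apply: eq_bigr => y _.
  by rewrite /al /be; ring.
have Sa : \sum_x al x * al x = (2 ^ k)%:R.
  under eq_bigr => x _ do rewrite /al sgnb_sq.
  by rewrite big_const_ord iter_addr_0.
have Sw : \sum_x w x * w x = (2 ^ k)%:R * (2 ^ k)%:R.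
  have -> : \sum_x w x * w x = \sum_y \sum_y' be y * be y' * \sum_x h k y x * h k y' x.
    rewrite /w; under eq_bigr => x _ do rewrite big_distrlr /=.
    rewrite exchange_big /=; apply: eq_bigr => y _.
    rewrite exchange_big /=; apply: eq_bigr => y' _.
    rewrite mulr_sumr; apply: eq_bigr => x _; rewrite (had_sym rat x y) (had_sym rat x y'); ring.
  under eq_bigr => y _ do under eq_bigr => y' _ do rewrite had_orth.
  have inner : forall y, \sum_y' be y * be y' * ((2 ^ k)%:R * (y == y')%:R) = (2 ^ k)%:R :> rat.
    move=> y; rewrite (bigD1 y) //= eqxx mulr1 big1 ?addr0; first by rewrite /be sgnb_sq mul1r.
    by move=> y' /negbTE; rewrite eq_sym => ->; rewrite !mulr0.
  under eq_bigr => y _ do rewrite inner.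
  by rewrite big_const_ord iter_addr_0 mulr_natr.
have pos : 0 <= \sum_x (t * al x - w x) * (t * al x - w x).
  by apply: sumr_ge0 => x _; rewrite -expr2 sqr_ge0.
have E : \sum_x (t * al x - w x) * (t * al x - w x) =
   t * t * (\sum_x al x * al x) - 2 * t * (\sum_x al x * w x) + \sum_x w x * w x.
  rewrite !mulr_sumr -sumrB -big_split /=; apply: eq_bigr => x _; ring.
rewrite E Sa Sw -LV Mt in pos.
have t0 : 0 < t by rewrite ltr0n expn_gt0.
have -> : (2 ^ (3 * m))%:R = t * t * t :> rat by rewrite /t -!natrM -!expnD; congr (_ ^ _)%:R; lia.
set L := local_value _ _ _ in pos *.
have : 0 <= 2 * t * (t * t * t - L) by move: pos; congr (_ <= _); ring.
by rewrite pmulr_rge0 ?subr_ge0 // mulr_gt0.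
Qed.
End PartD.
Fixpoint bent (k : nat) : 'I_(2 ^ k) -> rat :=
  match k return 'I_(2 ^ k) -> rat with
  | 0 => fun _ => 1
  | 1 => fun _ => 1
  | k'.+2 => fun x => hadamard2 rat (hfst x) (hfst (hsnd x)) * @bent k' (hsnd (hsnd x))
  end.
Arguments bent : clear implicits.

Lemma bentE k x1 x2 x3 :
  bent k.+2 (hidx x1 (hidx x2 x3)) = hadamard2 rat x1 x2 * bent k x3.
Proof. by rewrite /= !hfst_hidx !hsnd_hidx hfst_hidx. Qed.

Lemma H2_pm (i j : 'I_2) : hadamard2 rat i j = 1 \/ hadamard2 rat i j = -1.
Proof. by rewrite had2E; case: ifP; [right|left]. Qed.

Lemma bent_pm k x : bent k x = 1 \/ bent k x = -1.
Proof.
elim/ltn_ind: k x => -[|[|k]] IH x; try by left.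
move: x; apply: hidx_ind => x1; apply: hidx_ind => x2 x3.
rewrite bentE; case: (H2_pm x1 x2) => ->; case: (IH k (ltnW (ltnSn _)) x3) => ->;
 rewrite ?mulr1 ?mul1r ?mulrN1 ?opprK; by [left|right].
Qed.

Lemma H3 (x1 x2 : 'I_2) :
  \sum_(y1 < 2) \sum_(y2 < 2) hadamard2 rat x1 y1 * hadamard2 rat x2 y2 * hadamard2 rat y1 y2
  = 2 * hadamard2 rat x1 x2.
Proof.
rewrite !sum2 !had2E.
by case: x1 x2 => [[|[|//]] ?] [[|[|//]] ?] /=; rewrite ?mulr1 ?mul1r ?mulrN1 ?mulN1r ?opprK; ring.
Qed.

Lemma bent_eig m x :
  \sum_y hadamard rat (m + m) x y * bent (m + m) y = (2 ^ m)%:R * bent (m + m) x.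
Proof.
elim: m x => [|m IH] x.
  by rewrite big_ord1 /= !mxE; move: x => [[|//] ?] /=; rewrite mulr1.
move: x; have -> : (m.+1 + m.+1 = (m + m).+2)%N by lia.
 apply: hidx_ind => x1; apply: hidx_ind => x2 x3.
rewrite sum_hidx.
under eq_bigr => y1 _ do rewrite sum_hidx.
transitivity (\sum_(y1 < 2) \sum_(y2 < 2) (hadamard2 rat x1 y1 * hadamard2 rat x2 y2 * hadamard2 rat y1 y2)
   * \sum_y3 (hadamard rat (m + m) x3 y3 * bent (m + m) y3)).
  apply: eq_bigr => y1 _; apply: eq_bigr => y2 _; rewrite mulr_sumr; apply: eq_bigr => y3 _.
  rewrite hadE hadE bentE; ring.
rewrite IH.
under eq_bigr => y1 _ do rewrite -mulr_suml.
rewrite -mulr_suml H3 bentE expnS natrM; ring.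
Qed.
Lemma bent_sq k x : bent k x * bent k x = 1.
Proof. by case: (bent_pm x) => ->; rewrite ?mulr1 ?mulrNN ?mulr1. Qed.

Lemma bigmax_ge (T : finType) (s : rat) (F : T -> rat) i : F i <= \big[Num.max/s]_j F j.
Proof. by rewrite (bigD1 i) //= le_max lexx. Qed.

Lemma bigmax_le (T : finType) (s U : rat) (F : T -> rat) :
  s <= U -> (forall j, F j <= U) -> \big[Num.max/s]_j F j <= U.
Proof.
move=> sU FU; apply: (big_ind (fun v => v <= U)) => //.
by move=> x y xU yU; rewrite ge_max xU yU.
Qed.

Lemma partD k : ~~ odd k -> local_bound (hadamard rat k) = (2 ^ (3 * k./2))%:R.
Proof.
move=> ev.
have [m km] : exists m, k = (m + m)%N.
  exists k./2; rewrite addnn; move: (odd_double_half k); rewrite (negbTE ev) add0n => ->//.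
subst k; rewrite addnn doubleK -addnn.
apply/eqP; rewrite eq_le; apply/andP; split.
  apply: bigmax_le => [|a]; first exact: lv_upper.
  by apply: bigmax_le => [|b]; exact: lv_upper.
pose a0 := [ffun x => bent (m + m) x == -1].
have sa : forall x, sgnb rat (a0 x) = bent (m + m) x.
  by move=> x; rewrite ffunE; case: (bent_pm x) => ->; rewrite /sgnb ?expr1 ?expr0 //= eqxx.
apply: le_trans (bigmax_ge _ _ a0); apply: le_trans (bigmax_ge _ _ a0).
suff -> : local_value (hadamard rat (m + m)) a0 a0 = (2 ^ (3 * m))%:R by [].
rewrite /local_value.
transitivity (\sum_x bent (m + m) x * \sum_y (hadamard rat (m + m) x y * bent (m + m) y)).
  apply: eq_bigr => x _; rewrite mulr_sumr; apply: eq_bigr => y _; rewrite !sa; ring.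
under eq_bigr => x _ do rewrite bent_eig mulrCA.
under eq_bigr => x _ do rewrite bent_sq mulr1.
by rewrite big_const_ord iter_addr_0 -mulrnA -!expnD; do 2 f_equal; lia.
Qed.
Section Adj.
Variable C : numClosedFieldType.

Lemma adjmxE m n (A : 'M[C]_(m, n)) i j : adjmx A i j = Num.conj (A j i).
Proof. by rewrite !mxE. Qed.

Lemma adjmxK m n (A : 'M[C]_(m, n)) : adjmx (adjmx A) = A.
Proof. by apply/matrixP => i j; rewrite !adjmxE conjCK. Qed.

Lemma adjmxM m n p (A : 'M[C]_(m, n)) (B : 'M[C]_(n, p)) :
  adjmx (A *m B) = adjmx B *m adjmx A.
Proof.
apply/matrixP => i j; rewrite adjmxE !mxE rmorph_sum; apply: eq_bigr => l _.
by rewrite !mxE rmorphM mulrC.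
Qed.

Lemma adjmxD m n (A B : 'M[C]_(m, n)) : adjmx (A + B) = adjmx A + adjmx B.
Proof. by apply/matrixP => i j; rewrite !mxE rmorphD. Qed.

Lemma adjmxB m n (A B : 'M[C]_(m, n)) : adjmx (A - B) = adjmx A - adjmx B.
Proof. by apply/matrixP => i j; rewrite !mxE rmorphB. Qed.

Lemma adjmxZ m n a (A : 'M[C]_(m, n)) : adjmx (a *: A) = Num.conj a *: adjmx A.
Proof. by apply/matrixP => i j; rewrite !mxE rmorphM. Qed.

Lemma adjmx_sum m n (I : finType) (F : I -> 'M[C]_(m, n)) :
  adjmx (\sum_i F i) = \sum_i adjmx (F i).
Proof.
apply/matrixP => i j; rewrite adjmxE !summxE rmorph_sum; apply: eq_bigr => l _.
by rewrite adjmxE.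
Qed.

Lemma adjmx1 n : adjmx (1%:M : 'M[C]_n) = 1%:M.
Proof. by apply/matrixP => i j; rewrite !mxE eq_sym rmorph_nat. Qed.

Lemma adjmx_tprod m1 n1 m2 n2 (A : 'M[C]_(m1, n1)) (B : 'M[C]_(m2, n2)) :
  adjmx (tprod A B) = tprod (adjmx A) (adjmx B).
Proof. by apply: tprod_eq => i1 i2 j1 j2; rewrite adjmxE !tprod_entry !adjmxE rmorphM. Qed.

Lemma castmx_mulmx a b (e : a = b) (A B : 'M[C]_a) :
  castmx (e, e) A *m castmx (e, e) B = castmx (e, e) (A *m B).
Proof. by case: b / e. Qed.

Lemma castmx_adj a b (e : a = b) (A : 'M[C]_a) : adjmx (castmx (e, e) A) = castmx (e, e) (adjmx A).
Proof. by case: b / e. Qed.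

Lemma castmx1 a b (e : a = b) : castmx (e, e) (1%:M : 'M[C]_a) = 1%:M.
Proof. by case: b / e. Qed.

Lemma tprod_addl m1 n1 m2 n2 (A A' : 'M[C]_(m1, n1)) (B : 'M[C]_(m2, n2)) :
  tprod (A - A') B = tprod A B - tprod A' B.
Proof. by apply: tprod_eq => i1 i2 j1 j2; rewrite !mxE !tprod_entry !mxE mulrBl. Qed.

Lemma tprod_addr m1 n1 m2 n2 (A : 'M[C]_(m1, n1)) (B B' : 'M[C]_(m2, n2)) :
  tprod A (B - B') = tprod A B - tprod A B'.
Proof. by apply: tprod_eq => i1 i2 j1 j2; rewrite !mxE !tprod_entry !mxE mulrBr. Qed.

Definition herm_inv n (A : 'M[C]_n) := adjmx A = A /\ A *m A = 1%:M.

Lemma herm_inv_obs n (A : 'M[C]_n) : herm_inv A -> observable A.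
Proof.
move=> [hA iA]; split => // a /eigenvalueP [v vA v0].
have : v *m A *m A = (a * a) *: v by rewrite vA -scalemxAl vA scalerA.
rewrite -mulmxA iA mulmx1 => /eqP; rewrite -subr_eq0 -{1}(scale1r v) -scalerBl scaler_eq0 (negbTE v0) orbF.
rewrite subr_eq0 eq_sym -subr_eq0 (_ : a * a - 1 = (a - 1) * (a + 1)); last by ring.
have m11 : (-1 : C) <= 1 by rewrite -subr_ge0 opprK addr_ge0 ?ler01.
by rewrite mulf_eq0 subr_eq0 addr_eq0 => /orP[]/eqP->; rewrite lexx m11.
Qed.
End Adj.
Section PartC.
Variable C : numClosedFieldType.
Definition rr : C := (sqrtC 2)^-1.
Lemma rr_ge0 : 0 <= rr. Proof. by rewrite invr_ge0 sqrtC_ge0 ler0n. Qed.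
Lemma rr2 : rr * rr * 2 = 1.
Proof.
rewrite -expr2 /rr exprVn sqrtCK mulVf //.
by rewrite pnatr_eq0.
Qed.
Lemma crr : Num.conj rr = rr. Proof. exact: geC0_conj rr_ge0. Qed.
Lemma conj_rrM c : Num.conj (rr * c) = rr * Num.conj c.
Proof. by rewrite rmorphM; congr (_ * _); exact: crr. Qed.

Definition pz (i j : 'I_2) : C := if i == j then (if i == 0 :> nat then 1 else -1) else 0.
Definition px (i j : 'I_2) : C := if i == j then 0 else 1.
Definition PA (x : 'I_2) : 'M[C]_2 := \matrix_(i, j) (if x == 0 :> nat then pz i j else px i j).
Definition PB (y : 'I_2) : 'M[C]_2 :=
  \matrix_(i, j) (rr * (pz i j + (if y == 0 :> nat then 1 else -1) * px i j)).

Lemma PA_hi x : herm_inv (PA x).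
Proof.
split; apply/matrixP => i j; rewrite !mxE ?sum2 ?mxE /pz /px;
by case: x i j => [[|[|//]] ?] [[|[|//]] ?] [[|[|//]] ?] /=;
  rewrite ?rmorph0 ?rmorph1 ?rmorphN ?rmorph1; try ring.
Qed.

Lemma PB_hi y : herm_inv (PB y).
Proof.

split; apply/matrixP => i j; rewrite !mxE ?sum2 ?mxE /pz /px;
by case: y i j => [[|[|//]] ?] [[|[|//]] ?] [[|[|//]] ?] /=;
  rewrite ?conj_rrM ?mul1r ?mulr0 ?mulr1 ?mulN1r ?addr0 ?add0r ?rmorph0 ?rmorph1 ?rmorphN ?rmorph1;
  try first [ring | (transitivity (rr * rr * 2); [ring | exact: rr2])].
Qed.

Fixpoint obs (P : 'I_2 -> 'M[C]_2) k : 'I_(2 ^ k) -> 'M[C]_(2 ^ k) :=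
  match k return 'I_(2 ^ k) -> 'M[C]_(2 ^ k) with
  | 0 => fun _ => 1%:M
  | k'.+1 => fun x => castmx (ek k', ek k') (tprod (P (hfst x)) (@obs P k' (hsnd x)))
  end.
Arguments obs : clear implicits.

Lemma obsE P k x1 x2 i1 i2 j1 j2 :
  obs P k.+1 (hidx x1 x2) (hidx i1 i2) (hidx j1 j2) = P x1 i1 j1 * obs P k x2 i2 j2.
Proof.
rewrite /= castmxE hfst_hidx hsnd_hidx -tprod_entry; congr (tprod _ _ _ _); exact: val_inj.
Qed.

Lemma obs_hi P k x : (forall y, herm_inv (P y)) -> herm_inv (obs P k x).
Proof.
move=> HP; elim: k x => [|k IH] x /=.
  by split; rewrite ?adjmx1 ?mul1mx.
have [h1 i1] := HP (hfst x); have [h2 i2] := IH (hsnd x).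
split; first by rewrite castmx_adj adjmx_tprod h1 h2.
by rewrite castmx_mulmx -tprodE i1 i2 tprod1 castmx1.
Qed.
End PartC.
Arguments obs {C} P k.
Section PartC2.
Variable C : numClosedFieldType.
Local Notation PA := (@PA C).
Local Notation PB := (@PB C).

Lemma sum4 a b c d (F : 'I_a -> 'I_b -> C) (G : 'I_c -> 'I_d -> C) :
  \sum_(x1 < a) \sum_(x2 < c) \sum_(y1 < b) \sum_(y2 < d) F x1 y1 * G x2 y2 =
  (\sum_(x1 < a) \sum_(y1 < b) F x1 y1) * (\sum_(x2 < c) \sum_(y2 < d) G x2 y2).
Proof.
rewrite mulr_suml; apply: eq_bigr => x1 _.
rewrite exchange_big mulr_suml; apply: eq_bigr => y1 _.
rewrite mulr_sumr; apply: eq_bigr => x2 _; rewrite mulr_sumr //.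
Qed.

Definition Vk k := \sum_x \sum_y hadamard C k x y *
   \sum_i \sum_j obs PA k x i j * obs PB k y i j.

Definition c1 := \sum_(x1 < 2) \sum_(y1 < 2) hadamard2 C x1 y1 *
   \sum_(i < 2) \sum_(j < 2) PA x1 i j * PB y1 i j.

Lemma Vk_rec k : Vk k.+1 = c1 * Vk k.
Proof.
rewrite /Vk /c1 -sum4 sum_hidx; apply: eq_bigr => x1 _; apply: eq_bigr => x2 _.
rewrite sum_hidx; apply: eq_bigr => y1 _; apply: eq_bigr => y2 _.
rewrite hadE mulrACA; congr (_ * _).
rewrite -sum4 sum_hidx; apply: eq_bigr => i1 _; apply: eq_bigr => i2 _.
rewrite sum_hidx; apply: eq_bigr => j1 _; apply: eq_bigr => j2 _.
by rewrite !obsE mulrACA.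
Qed.

Lemma Vk0 : Vk 0 = 1.
Proof. by rewrite /Vk !big_ord1 /= !mxE /= !mulr1. Qed.

Lemma c1E : c1 = 8 * rr C.
Proof.
rewrite /c1 !sum2 !had2E /PA /PB !mxE.
rewrite ?sum2 ?mxE /pz /px /=; ring.
Qed.
End PartC2.
Section PartC3.
Variable C : numClosedFieldType.

Lemma sum_delta n (i : 'I_n) (G : 'I_n -> C) : \sum_j (i == j)%:R * G j = G i.
Proof.
rewrite (bigD1 i) //= eqxx mul1r big1 ?addr0 // => j /negbTE.
by rewrite eq_sym => ->; rewrite mul0r.
Qed.

Definition sv k : C := (sqrtC (2 ^ k)%:R)^-1.
Lemma sv_ge0 k : 0 <= sv k. Proof. by rewrite invr_ge0 sqrtC_ge0 ler0n. Qed.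
Lemma csv k : Num.conj (sv k) = sv k. Proof. exact: geC0_conj (sv_ge0 k). Qed.
Lemma sv2 k : sv k * sv k = ((2 ^ k)%:R)^-1.
Proof. by rewrite -expr2 /sv exprVn sqrtCK. Qed.
Lemma sv2M k : sv k * sv k * (2 ^ k)%:R = 1.
Proof. by rewrite sv2 mulVf // pnatr_eq0 expn_eq0. Qed.

Definition vst k : 'cV[C]_(2 ^ k * 2 ^ k) :=
  \matrix_(l, j) (sv k * (tfst l == tsnd l)%:R).
Definition rho k := vst k *m adjmx (vst k).

Lemma vE k i j c : vst k (tidx i j) c = sv k * (i == j)%:R.
Proof. by rewrite mxE tfst_tidx tsnd_tidx. Qed.
Lemma cvE k i j c : Num.conj (vst k (tidx i j) c) = sv k * (i == j)%:R.
Proof. by rewrite vE rmorphM rmorph_nat; congr (_ * _); exact: csv. Qed.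

Lemma cvs k (b : nat) : Num.conj (sv k * b%:R) = sv k * b%:R.
Proof. by rewrite rmorphM rmorph_nat; congr (_ * _); exact: csv. Qed.

Lemma vv k : adjmx (vst k) *m vst k = 1%:M.
Proof.
apply/matrixP => i j; rewrite !ord1 !mxE sum_tidx /=.
transitivity (\sum_(a < 2 ^ k) sv k * sv k).
  apply: eq_bigr => a _.
  rewrite (eq_bigr (fun b => (a == b)%:R * (sv k * sv k * (a == b)%:R))); last first.
    by move=> b _; rewrite adjmxE cvE vE; ring.
  by rewrite sum_delta eqxx mulr1.
by rewrite big_const_ord iter_addr_0 -mulr_natr sv2M.
Qed.

Lemma rho_density k : density (rho k).
Proof.
split.
- by rewrite /Defs.hermitian /rho adjmxM adjmxK.
- move=> a /eigenvalueP [u uA u0].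
  have rr : rho k *m rho k = rho k by rewrite /rho mulmxA -(mulmxA (vst k)) vv mulmx1.
  have : u *m rho k *m rho k = (a * a) *: u by rewrite uA -scalemxAl uA scalerA.
  rewrite -mulmxA rr uA => /eqP; rewrite -subr_eq0 -scalerBl scaler_eq0 (negbTE u0) orbF.
  rewrite (_ : a - a * a = a * (1 - a)); last by ring.
  rewrite mulf_eq0 subr_eq0 => /orP[]/eqP <-; by rewrite ?lexx ?ler01.
- by rewrite /rho mxtrace_mulC vv mxtrace1.
Qed.

Lemma trE k (X Y : 'M[C]_(2 ^ k)) :
  \tr (rho k *m tprod X Y) = sv k * sv k * \sum_i \sum_j X i j * Y i j.
Proof.
rewrite /rho -mulmxA mxtrace_mulC /mxtrace big_ord1 !mxE sum_tidx.
transitivity (\sum_(j1 < 2 ^ k) \sum_(j2 < 2 ^ k) (j1 == j2)%:R *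
    (sv k * \sum_(i1 < 2 ^ k) sv k * (X i1 j1 * Y i1 j2))).
  apply: eq_bigr => j1 _; apply: eq_bigr => j2 _.
  rewrite mxE sum_tidx vE mulrC -mulrA mulrCA; congr (_ * (_ * _)).
  apply: eq_bigr => i1 _.
  rewrite (eq_bigr (fun i2 => (i1 == i2)%:R * (sv k * (X i1 j1 * Y i2 j2)))) ?sum_delta //.
  by move=> i2 _; rewrite adjmxE cvE tprod_entry; ring.
under eq_bigr => j1 _ do rewrite sum_delta.
under eq_bigr => j1 _ do rewrite mulr_sumr.
rewrite exchange_big mulr_sumr; apply: eq_bigr => i _.
rewrite mulr_sumr; apply: eq_bigr => j _; ring.
Qed.
End PartC3.
Section PartCfin.
Variable C : numClosedFieldType.

Lemma VkE k : Vk C k = (8 * rr C) ^+ k.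
Proof. by elim: k => [|k IH]; rewrite ?Vk0 // Vk_rec IH c1E exprS. Qed.

Lemma q4 : (4 * rr C) ^+ 2 = 8.
Proof.
rewrite expr2; transitivity (8 * (rr C * rr C * 2)); first by ring.
by rewrite rr2 mulr1.
Qed.

Lemma sqrt8 k : sqrtC (2 ^ (3 * k))%:R = (4 * rr C) ^+ k :> C.
Proof.
rewrite -[RHS]sqrCK ?exprn_ge0 ?mulr_ge0 ?rr_ge0 ?ler0n //.
by rewrite -exprM (mulnC k 2) exprM q4 expnM natrX.
Qed.

Lemma partC k : exists (d1 d2 : nat) (rho : 'M[C]_(d1 * d2))
           (A1 : 'I_(2 ^ k) -> 'M[C]_d1) (A2 : 'I_(2 ^ k) -> 'M[C]_d2),
      qstrategy rho A1 A2 /\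
      qvalue (hadamard C k) rho A1 A2 = sqrtC (2 ^ (3 * k))%:R.
Proof.
exists (2 ^ k)%N, (2 ^ k)%N, (rho C k), (obs (PA C) k), (obs (PB C) k); split.
  split; first exact: rho_density.
  by split => x; apply: herm_inv_obs; apply: obs_hi => y; [apply: PA_hi | apply: PB_hi].
rewrite /qvalue.
transitivity (sv C k * sv C k * Vk C k).
  rewrite /Vk mulr_sumr; apply: eq_bigr => x _; rewrite mulr_sumr; apply: eq_bigr => y _.
  by rewrite trE mulrCA.
rewrite VkE sqrt8 sv2 (_ : 8 * rr C = 2 * (4 * rr C)); last by ring.
by rewrite exprMn natrX mulKf // expf_neq0 // pnatr_eq0.
Qed.
End PartCfin.
Section Spec.
Variable C : numClosedFieldType.

Lemma adj_tc n (A : 'M[C]_n) : (A ^t Num.conj)%sesqui = adjmx A.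
Proof. by rewrite /adjmx map_trmx. Qed.

Lemma herm_normal n (A : 'M[C]_n) : adjmx A = A -> A \is normalmx.
Proof. by move=> hA; rewrite qualifE adj_tc hA. Qed.

Lemma spec_decomp n (A : 'M[C]_n) : adjmx A = A ->
  exists (Q : 'M[C]_n) (D : 'rV[C]_n),
    [/\ Q *m adjmx Q = 1%:M, adjmx Q *m Q = 1%:M, A = Q *m diag_mx D *m adjmx Q
      & forall i, eigenvalue A (D 0 i)].
Proof.
move=> hA.
have /orthomx_spectralP eA := herm_normal hA.
set P := spectralmx A in eA; set D := spectral_diag A in eA.
have uP : P \is unitarymx by exact: spectral_unitarymx.
have PP : P *m adjmx P = 1%:M by rewrite -adj_tc; apply/unitarymxP.
have PP' : adjmx P *m P = 1%:M by apply: mulmx1C.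
have eA' : A = adjmx P *m diag_mx D *m P by rewrite {1}eA invmx_unitary // adj_tc.
exists (adjmx P), D; rewrite adjmxK; split => // i.
apply/eigenvalueP; exists (row i P).
  rewrite eA' !mulmxA -row_mul PP -row_mul mul1mx -row_mul mul_diag_mx.
  by apply/rowP => j; rewrite !mxE.
apply/negP => /eqP r0.
have := row_mul i P (adjmx P); rewrite PP r0 mul0mx row1 => /rowP /(_ i).
rewrite !mxE !eqxx /= => /eqP; by rewrite pnatr_eq0.
Qed.

Lemma adj_diag n (d : 'rV[C]_n) : adjmx (diag_mx d) = diag_mx (map_mx Num.conj d).
Proof.
apply/matrixP => i j; rewrite !mxE.
by case: (eqVneq i j) => [->|ne]; rewrite ?mulr1n ?mulr0n ?rmorph0.
Qed.

Lemma psd_fact n (Q : 'M[C]_n) (d : 'rV[C]_n) : (forall i, 0 <= d 0 i) ->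
  exists Y : 'M[C]_n, Q *m diag_mx d *m adjmx Q = Y *m adjmx Y.
Proof.
move=> d0; exists (Q *m diag_mx (\row_i sqrtC (d 0 i))).
rewrite adjmxM adj_diag [RHS]mulmxA -[in RHS](mulmxA Q) mulmx_diag; congr (_ *m diag_mx _ *m _).
apply/rowP => i; rewrite !mxE geC0_conj ?sqrtC_ge0 //.
by rewrite -expr2 sqrtCK.
Qed.

Lemma density_fact n (rho : 'M[C]_n) : density rho -> exists R : 'M[C]_n, rho = R *m adjmx R.
Proof.
move=> [hr er _]; have [Q [D [_ _ eA eig]]] := spec_decomp hr.
have [Y eY] := @psd_fact n Q D (fun i => er _ (eig i)).
by exists Y; rewrite -eY.
Qed.

Lemma obs_fact n (A : 'M[C]_n) : observable A -> exists Y : 'M[C]_n, 1%:M - A *m A = Y *m adjmx Y.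
Proof.
move=> [hA eA]; have [Q [D [QQ QQ' eQ eig]]] := spec_decomp hA.
have [|Y eY] := @psd_fact n Q (\row_i (1 - D 0 i * D 0 i)).
  move=> i; rewrite mxE; have /andP[l1 u1] := eA _ (eig i).
  rewrite (_ : 1 - D 0 i * D 0 i = (1 - D 0 i) * (1 + D 0 i)); last by ring.
  rewrite mulr_ge0 // ?subr_ge0 //.
have -> : 1 + D 0 i = D 0 i - (-1) by rewrite opprK addrC.
by rewrite subr_ge0.
exists Y; rewrite -eY.
have -> : A *m A = Q *m diag_mx (\row_i (D 0 i * D 0 i)) *m adjmx Q.
  by rewrite {1 2}eQ !mulmxA -(mulmxA _ (adjmx Q)) QQ' mulmx1 -(mulmxA Q) mulmx_diag.
have -> : diag_mx (\row_i (1 - D 0 i * D 0 i)) = 1%:M - diag_mx (\row_i (D 0 i * D 0 i)).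
  apply/matrixP => i j; rewrite !mxE; case: (i == j); rewrite ?mulr1n ?mulr0n ?subr0 //.
by rewrite mulmxBr mulmx1 mulmxBl QQ.
Qed.
End Spec.
Section PartB.
Variable C : numClosedFieldType.

Lemma tr_psd n (Y K : 'M[C]_n) : 0 <= \tr (Y *m adjmx Y *m (K *m adjmx K)).
Proof.
have -> : Y *m adjmx Y *m (K *m adjmx K) = (Y *m adjmx Y *m K) *m adjmx K by rewrite !mulmxA.
rewrite mxtrace_mulC !mulmxA.
have -> : adjmx K *m Y *m adjmx Y *m K = (adjmx K *m Y) *m adjmx (adjmx K *m Y).
  by rewrite adjmxM adjmxK !mulmxA.
set W := adjmx K *m Y.
rewrite /mxtrace; apply: sumr_ge0 => i _; rewrite mxE; apply: sumr_ge0 => j _.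
by rewrite adjmxE mul_conjC_ge0.
Qed.

Definition tau n (rho X : 'M[C]_n) := \tr (rho *m X).
Lemma tauD n (rho X Y : 'M[C]_n) : tau rho (X + Y) = tau rho X + tau rho Y.
Proof. by rewrite /tau mulmxDr mxtraceD. Qed.
Lemma tauB n (rho X Y : 'M[C]_n) : tau rho (X - Y) = tau rho X - tau rho Y.
Proof. by rewrite /tau mulmxBr raddfB. Qed.
Lemma tauZ n (rho X : 'M[C]_n) c : tau rho (c *: X) = c * tau rho X.
Proof. by rewrite /tau -scalemxAr mxtraceZ. Qed.
Lemma tau_sum n (rho : 'M[C]_n) (I : finType) (F : I -> 'M[C]_n) :
  tau rho (\sum_i F i) = \sum_i tau rho (F i).
Proof. by rewrite /tau mulmx_sumr raddf_sum. Qed.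

Lemma partB k d1 d2 (rho : 'M[C]_(d1 * d2)) (A1 : 'I_(2 ^ k) -> 'M[C]_d1)
  (A2 : 'I_(2 ^ k) -> 'M[C]_d2) :
  qstrategy rho A1 A2 -> qvalue (hadamard C k) rho A1 A2 <= sqrtC (2 ^ (3 * k))%:R.
Proof.
move=> [dr [o1 o2]].
have [R eR] := density_fact dr.
have [_ _ trr] := dr.
set M : C := (2 ^ k)%:R.
have M0 : 0 <= M by rewrite ler0n.
set t := sqrtC M.
have t0 : 0 < t by rewrite sqrtC_gt0 ltr0n expn_gt0.
have tt : t * t = M by rewrite -expr2 sqrtCK.
have ct : Num.conj t = t by apply: geC0_conj; rewrite ltW.
set g := hadamard C k.
pose a x := tprod (A1 x) (1%:M : 'M[C]_d2).
pose b y := tprod (1%:M : 'M[C]_d1) (A2 y).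
have abE x y : tprod (A1 x) (A2 y) = a x *m b y by rewrite -tprodE mulmx1 mul1mx.
have baE x y : b y *m a x = a x *m b y by rewrite -!tprodE !mulmx1 !mul1mx.
have ha x : adjmx (a x) = a x by rewrite adjmx_tprod adjmx1 (proj1 (o1 x)).
have hb y : adjmx (b y) = b y by rewrite adjmx_tprod adjmx1 (proj1 (o2 y)).
have psd (K : 'M[C]_(d1 * d2)) : 0 <= tau rho (K *m adjmx K) by rewrite /tau eR tr_psd.
have tau1 : tau rho 1%:M = 1 by rewrite /tau mulmx1.
have Sa x : tau rho (a x *m a x) <= 1.
  have [Y eY] := obs_fact (o1 x).
  have : 1%:M - a x *m a x = tprod Y (1%:M : 'M[C]_d2) *m adjmx (tprod Y (1%:M : 'M[C]_d2)).
    have e1 : 1%:M - a x *m a x = tprod (1%:M - A1 x *m A1 x) (1%:M : 'M[C]_d2).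
      by rewrite tprod_addl tprod1 /a -tprodE mulmx1.
    by rewrite e1 eY adjmx_tprod adjmx1 -tprodE mulmx1.
  move=> /(congr1 (tau rho)); rewrite tauB tau1 => e.
  by rewrite -subr_ge0 e psd.
have Sb y : tau rho (b y *m b y) <= 1.
  have [Y eY] := obs_fact (o2 y).
  have : 1%:M - b y *m b y = tprod (1%:M : 'M[C]_d1) Y *m adjmx (tprod (1%:M : 'M[C]_d1) Y).
    have e1 : 1%:M - b y *m b y = tprod (1%:M : 'M[C]_d1) (1%:M - A2 y *m A2 y).
      by rewrite tprod_addr tprod1 /b -tprodE mulmx1.
    by rewrite e1 eY adjmx_tprod adjmx1 -tprodE mulmx1.
  move=> /(congr1 (tau rho)); rewrite tauB tau1 => e.
  by rewrite -subr_ge0 e psd.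
pose c y := \sum_x g x y *: a x.
pose Z y := c y - t *: b y.
have hc y : adjmx (c y) = c y.
  rewrite /c adjmx_sum; apply: eq_bigr => x _.
  by rewrite adjmxZ ha had_conj.
have hZ y : adjmx (Z y) = Z y by rewrite /Z adjmxB adjmxZ ct hc hb.
have Zpos y : 0 <= tau rho (Z y *m Z y) by rewrite -{2}hZ psd.
have cb y : b y *m c y = c y *m b y.
  rewrite /c mulmx_sumr mulmx_suml; apply: eq_bigr => x _.
  by rewrite -scalemxAr -scalemxAl baE.
have ZZ y : tau rho (Z y *m Z y) =
    tau rho (c y *m c y) - 2 * t * tau rho (c y *m b y) + M * tau rho (b y *m b y).
  rewrite /Z mulmxBl !mulmxBr -!scalemxAl -!scalemxAr cb scalerA tt.
  rewrite !tauB !tauZ; ring.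
set Q := qvalue _ _ _ _.
have QE : Q = \sum_y tau rho (c y *m b y).
  rewrite /Q /qvalue exchange_big /=; apply: eq_bigr => y _.
  rewrite /c mulmx_suml tau_sum; apply: eq_bigr => x _.
  by rewrite abE -scalemxAl tauZ.
have cc y : tau rho (c y *m c y) = \sum_x \sum_x' g x y * g x' y * tau rho (a x *m a x').
  rewrite /c mulmx_suml tau_sum; apply: eq_bigr => x _.
  rewrite -scalemxAl tauZ mulmx_sumr tau_sum mulr_sumr; apply: eq_bigr => x' _.
  by rewrite -scalemxAr tauZ; ring.
have CE : \sum_y tau rho (c y *m c y) = M * \sum_x tau rho (a x *m a x).
  under eq_bigr => y _ do rewrite cc.
  rewrite exchange_big /= mulr_sumr; apply: eq_bigr => x _.
  rewrite exchange_big /=.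
  rewrite (eq_bigr (fun x' => (x == x')%:R * (M * tau rho (a x *m a x')))); first by rewrite sum_delta.
  by move=> x' _; rewrite -mulr_suml had_orth; ring.
have P0 : 0 <= \sum_y tau rho (Z y *m Z y) by apply: sumr_ge0 => y _; apply: Zpos.
rewrite (eq_bigr _ (fun y _ => ZZ y)) big_split sumrB /= -mulr_sumr -mulr_sumr CE -QE in P0.
have SA : \sum_x tau rho (a x *m a x) <= M.
  by apply: le_trans (ler_sum _ (fun x _ => Sa x)) _; rewrite big_const_ord iter_addr_0.
have SB : \sum_y tau rho (b y *m b y) <= M.
  by apply: le_trans (ler_sum _ (fun y _ => Sb y)) _; rewrite big_const_ord iter_addr_0.
have sq : sqrtC (2 ^ (3 * k))%:R = M * t.
  rewrite -[RHS]sqrCK ?mulr_ge0 ?(ltW t0) //; apply: congr1.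
  rewrite exprMn !expr2 tt /M -!natrM -!expnD.
  by rewrite (_ : (3 * k = k + k + k)%N) //; lia.
rewrite sq.
have : 0 <= 2 * t * (M * t - Q).
  have -> : 2 * t * (M * t - Q) = M * (t * t) - 2 * t * Q + M * (t * t) by ring.
  rewrite tt; apply: (le_trans P0).
  by apply: lerD; [apply: lerD => //; apply: ler_wpM2l | apply: ler_wpM2l].
by rewrite pmulr_rge0 ?subr_ge0 // mulr_gt0 // ltr0n.
Qed.

End PartB.

Theorem mainTheorem6 (C : numClosedFieldType) (k : nat) (hk : (1 <= k)%N) :
  (* T := sqrt(M1 M2) ||g||_2 = 2^{3k/2}, with M1 = M2 = 2^k *)
  ((exists s : C, largest_singular_value (hadamard C k) s) /\
   (forall s : C, largest_singular_value (hadamard C k) s ->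
      sqrtC ((2 ^ k)%:R * (2 ^ k)%:R) * s = sqrtC (2 ^ (3 * k))%:R)) /\
  (* Q(g) = 2^{3k/2}: upper bound for every quantum strategy ... *)
  ((forall (d1 d2 : nat) (rho : 'M[C]_(d1 * d2))
           (A1 : 'I_(2 ^ k) -> 'M[C]_d1) (A2 : 'I_(2 ^ k) -> 'M[C]_d2),
      qstrategy rho A1 A2 ->
      qvalue (hadamard C k) rho A1 A2 <= sqrtC (2 ^ (3 * k))%:R) /\
  (* ... and it is attained *)
   (exists (d1 d2 : nat) (rho : 'M[C]_(d1 * d2))
           (A1 : 'I_(2 ^ k) -> 'M[C]_d1) (A2 : 'I_(2 ^ k) -> 'M[C]_d2),
      qstrategy rho A1 A2 /\
      qvalue (hadamard C k) rho A1 A2 = sqrtC (2 ^ (3 * k))%:R)) /\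
  (* for even k, B(g) = 2^{3k/2} *)
  (~~ odd k -> local_bound (hadamard rat k) = (2 ^ (3 * k./2))%:R).
Proof.
split; first exact: partA.
split; last exact: partD.
split; last exact: partC.
by move=> d1 d2 rho A1 A2; apply: partB.
Qed.
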